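(* For real $\alpha\ne3$ let $$\Phi_\alpha(X)=\frac{1}{3-\alpha}\big(\sigma_1X\sigma_1+\sigma_2X\sigma_2+\sigma_3X\sigma_3-\alpha X\big),\qquad X\in M_2(\mathbb{C}).$$ Then $\Phi_\alpha$ is positive if and only if $\alpha\le1$; it is a Schwarz map if and only if $\alpha\le\frac13$; and it is completely positive if and only if $\alpha\le0$.
   Context: $\sigma_1,\sigma_2,\sigma_3$ are the Pauli matrices; $\Phi_\alpha$ is unital. A unital linear map $\Phi$ is a Schwarz map if $\Phi(X^\dagger X)\ge\Phi(X^\dagger)\Phi(X)$ (in the positive semidefinite order) for all $X\in M_2(\mathbb{C})$. *)

(* Defs.v *)
From HB Require Import structures.
From mathcomp Require Import all_boot all_order all_algebra.
From mathcomp Require Import complex mxtens.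
Set Implicit Arguments. Unset Strict Implicit. Unset Printing Implicit Defensive.
Import Order.TTheory GRing.Theory Num.Theory.
Local Open Scope ring_scope.

Section Defs.
Variable R : rcfType.
Local Notation C := (R[i]).

Definition adjmx m n (A : 'M[C]_(m, n)) : 'M[C]_(n, m) := (map_mx Num.conj A)^T.

Definition psd n (A : 'M[C]_n) : Prop :=
  adjmx A = A /\ forall v : 'cV[C]_n, 0 <= (adjmx v *m A *m v) 0 0.

Definition sigma1 : 'M[C]_2 := \matrix_(i < 2, j < 2) (if i != j then 1 else 0).
Definition sigma2 : 'M[C]_2 := \matrix_(i < 2, j < 2)
  (if (i == 0) && (j == 1) then - 'i%C
   else if (i == 1) && (j == 0) then 'i%C else 0).
Definition sigma3 : 'M[C]_2 := \matrix_(i < 2, j < 2)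
  (if i == j then (if i == 0 then 1 else -1) else 0).

Definition Phi (alpha : R) (X : 'M[C]_2) : 'M[C]_2 :=
  ((3 - alpha)^-1)%:C%C *: (sigma1 *m X *m sigma1 + sigma2 *m X *m sigma2
                         + sigma3 *m X *m sigma3 - alpha%:C%C *: X).

Definition positive_map n m (f : 'M[C]_n -> 'M[C]_m) : Prop :=
  forall X, psd X -> psd (f X).

Definition schwarz_map n (f : 'M[C]_n -> 'M[C]_n) : Prop :=
  forall X, psd (f (adjmx X *m X) - f (adjmx X) *m f X).

Definition blockmx k n (X : 'M[C]_(k * n)) (i j : 'I_k) : 'M[C]_n :=
  \matrix_(a, b) X (mxtens_index (i, a)) (mxtens_index (j, b)).

(* id_k (x) f acting on M_k (x) M_n = M_k(M_n) *)
Definition ampl k n m (f : 'M[C]_n -> 'M[C]_m) (X : 'M[C]_(k * n)) : 'M[C]_(k * m) :=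
  \sum_(i < k) \sum_(j < k) (delta_mx i j *t f (blockmx X i j)).

Definition completely_positive n m (f : 'M[C]_n -> 'M[C]_m) : Prop :=
  forall k : nat, positive_map (@ampl k n m f).

End Defs.

(* Main.v *)
Require Import Defs.
From HB Require Import structures.
From mathcomp Require Import all_boot all_order all_algebra.
From mathcomp Require Import complex mxtens.
From mathcomp Require Import ring lra.
Import Order.TTheory GRing.Theory Num.Theory.
Local Open Scope ring_scope.
Section S.
Variable R : rcfType.
Local Notation C := (R[i]).
Local Notation RC x := ((x : R)%:C%C).

Lemma conjRC (x : R) : Num.conj (RC x) = RC x.
Proof. exact: conjc_real. Qed.

Lemma modI (j l r c : C) : j * j = -1 -> l = r + (j * j + 1) * c -> l = r.
Proof. by move=> h ->; rewrite h addNr mul0r addr0. Qed.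

Lemma sum2 (F : 'I_2 -> C) : \sum_(i < 2) F i = F 0 + F 1.
Proof. rewrite !big_ord_recl big_ord0 addr0; congr (_ + F _); exact: val_inj. Qed.

Lemma ord2P (i : 'I_2) : i = 0 \/ i = 1.
Proof. case: i => [[|[|m]] Hi] //; [left|right]; exact: val_inj. Qed.

Lemma PhiE (alpha : R) (X : 'M[C]_2) : Phi alpha X =
  \matrix_(i, j) (RC ((3 - alpha)^-1) * ((if i == j then 2 * (X 0 0 + X 1 1) else 0) - (1 + RC alpha) * X i j)).
Proof.
apply/matrixP => i j; rewrite /Phi !mxE !sum2 !mxE !sum2 !mxE.
have hj : ('i%C : C) * 'i%C = -1 by rewrite -expr2 sqr_i.
move: (((3 - alpha)^-1)%:C%C : C) (alpha%:C%C : C) => k a.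
case: (ord2P i) => ->; case: (ord2P j) => -> /=.
- by apply: (@modI _ _ _ (- k * X 1 1) hj); ring.
- by apply: (@modI _ _ _ (k * X 1 0) hj); ring.
- by apply: (@modI _ _ _ (k * X 0 1) hj); ring.
- by apply: (@modI _ _ _ (- k * X 0 0) hj); ring.
Qed.

Definition qf n (M : 'M[C]_n) (v : 'cV[C]_n) := (adjmx v *m M *m v) 0 0.

Lemma adjmxE m n (A : 'M[C]_(m,n)) i j : adjmx A i j = Num.conj (A j i).
Proof. by rewrite /adjmx !mxE. Qed.

Lemma adjmxK m n (A : 'M[C]_(m,n)) : adjmx (adjmx A) = A.
Proof. by apply/matrixP=> i j; rewrite !adjmxE conjCK. Qed.

Lemma adjmx_mul m n p (A : 'M[C]_(m,n)) (B : 'M[C]_(n,p)) :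
  adjmx (A *m B) = adjmx B *m adjmx A.
Proof. by rewrite /adjmx map_mxM trmx_mul. Qed.

Lemma adjmxD m n (A B : 'M[C]_(m,n)) : adjmx (A + B) = adjmx A + adjmx B.
Proof. by apply/matrixP=> i j; rewrite !mxE rmorphD. Qed.

Lemma adjmxZ m n (c : R) (A : 'M[C]_(m,n)) : adjmx (RC c *: A) = RC c *: adjmx A.
Proof. by apply/matrixP=> i j; rewrite !mxE rmorphM /= conjRC. Qed.

Lemma qf_ge0_adj n (v : 'cV[C]_n) : 0 <= (adjmx v *m v) 0 0.
Proof.
rewrite mxE; apply: sumr_ge0 => i _; rewrite adjmxE mulrC; exact: mul_conjC_ge0.
Qed.

Lemma psd1 n : psd (1%:M : 'M[C]_n).
Proof.
split.
  apply/matrixP=> i j; rewrite !mxE eq_sym.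
  by case: (i == j); rewrite /= ?conjC1 ?conjC0.
by move=> v; rewrite mulmx1; apply: qf_ge0_adj.
Qed.

Lemma psd_conj m n (L : 'M[C]_(m,n)) (X : 'M[C]_n) : psd X -> psd (L *m X *m adjmx L).
Proof.
case=> hX hq; split.
  by rewrite !adjmx_mul adjmxK hX mulmxA.
move=> v; have := hq (adjmx L *m v).
by rewrite adjmx_mul adjmxK !mulmxA.
Qed.

Lemma psd_add n (X Y : 'M[C]_n) : psd X -> psd Y -> psd (X + Y).
Proof.
case=> hX qX [hY qY]; split; first by rewrite adjmxD hX hY.
by move=> v; rewrite mulmxDr mulmxDl mxE addr_ge0.
Qed.

Lemma psd_scale n (c : R) (X : 'M[C]_n) : 0 <= c -> psd X -> psd (RC c *: X).
Proof.
move=> hc [hX qX]; split; first by rewrite adjmxZ hX.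
by move=> v; rewrite -scalemxAr -scalemxAl mxE mulr_ge0 // ler0c.
Qed.

Lemma qf2E (M : 'M[C]_2) (v : 'cV[C]_2) : (adjmx v *m M *m v) 0 0 =
  Num.conj (v 0 0) * (M 0 0 * v 0 0 + M 0 1 * v 1 0)
  + Num.conj (v 1 0) * (M 1 0 * v 0 0 + M 1 1 * v 1 0).
Proof. rewrite !mxE !sum2 !mxE !sum2 !adjmxE. ring. Qed.


Definition vec2 (x y : C) : 'cV[C]_2 := \col_i (if i == 0 then x else y).

Lemma vec2E0 x y : vec2 x y 0 0 = x. Proof. by rewrite mxE. Qed.
Lemma vec2E1 x y : vec2 x y 1 0 = y. Proof. by rewrite mxE. Qed.

Lemma herm2 (X : 'M[C]_2) : adjmx X = X ->
  [/\ Num.conj (X 0 0) = X 0 0, Num.conj (X 1 1) = X 1 1,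
      Num.conj (X 0 1) = X 1 0 & Num.conj (X 1 0) = X 0 1].
Proof.
move=> h; have e i j : Num.conj (X i j) = X j i.
  by rewrite -[in RHS]h mxE mxE.
by rewrite !e.
Qed.

Lemma pos_le1 (alpha : R) : alpha <= 1 -> positive_map (Phi alpha).
Proof.
move=> ha X [hX hq].
have [e00 e11 e01 e10] := herm2 _ hX.
have k0 : 0 <= RC ((3 - alpha)^-1) by rewrite ler0c invr_ge0 subr_ge0 (le_trans ha) // ler1n.
have a0 : 0 <= 1 - RC alpha by rewrite -(rmorph1 (real_complex R)) -rmorphB ler0c subr_ge0.
split.
  apply/matrixP=> i j; rewrite PhiE !mxE.
  case: (ord2P i) => ->; case: (ord2P j) => -> /=;
  by rewrite !(rmorphM, rmorphB, rmorphD, rmorph_nat, rmorph0, rmorph1) /= !conjRC ?e00 ?e11 ?e01 ?e10.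
move=> v.
pose w := vec2 (Num.conj (v 1 0)) (- Num.conj (v 0 0)).
have hv := hq v; have hw := hq w.
rewrite !qf2E /w !vec2E0 !vec2E1 in hv hw *.
rewrite PhiE !mxE /=.
rewrite rmorphN /= !conjCK in hw.
move: k0 a0 hv hw; move: (RC ((3 - alpha)^-1)) (RC alpha) => k a k0 a0.
match goal with |- is_true (@Order.le _ _ _ ?qv) -> is_true (@Order.le _ _ _ ?qw) -> is_true (@Order.le _ _ _ ?e) =>
  move=> hv hw; have -> : e = k * (2 * qw + (1 - a) * qv) by ring end.
by rewrite mulr_ge0 // addr_ge0 // mulr_ge0 // ler0n.
Qed.


Ltac qfge H := match type of H with is_true (@Order.le _ _ _ ?e) => constr:(e) end.

Lemma inv_pos (d : R) : d != 0 -> 0 <= d^-1 -> 0 < d.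
Proof.
move=> hd h; rewrite -invr_gt0 lt_def h andbT invr_eq0 //.
Qed.

Lemma pos_ge1 (alpha : R) : alpha != 3 -> positive_map (Phi alpha) -> alpha <= 1.
Proof.
move=> h3 hP.
pose X0 : 'M[C]_2 := \matrix_(i, j) (if (i == 0) && (j == 0) then 1 else 0).
have pX0 : psd X0.
  split.
    apply/matrixP=> i j; rewrite !mxE.
    by case: (ord2P i) => ->; case: (ord2P j) => -> /=; rewrite ?conjC1 ?conjC0.
  move=> v; rewrite qf2E !mxE /= !(mul0r, mulr0, addr0, add0r, mul1r) mulrC.
  exact: mul_conjC_ge0.
have [_ q] := hP X0 pX0.
have q0 := q (vec2 1 0); have q1 := q (vec2 0 1).
rewrite !qf2E !vec2E0 !vec2E1 !PhiE !mxE /= !conjC1 !conjC0 in q0 q1.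
have d0 : (3 - alpha) != 0 by rewrite subr_eq0 eq_sym.
move: q0; match goal with |- is_true (@Order.le _ _ _ ?e) -> _ =>
  have -> : e = RC ((3 - alpha)^-1 * (1 - alpha)) by rewrite !rmorphM rmorphB /= rmorph1; ring end.
move: q1; match goal with |- is_true (@Order.le _ _ _ ?e) -> _ =>
  have -> : e = RC ((3 - alpha)^-1 * 2) by rewrite !rmorphM /= rmorph_nat; ring end.
rewrite !ler0c => q1 q0.
have dp : 0 < 3 - alpha.
  apply: inv_pos => //; by rewrite -(pmulr_lge0 _ (ltr0n _ 2)).
have ip : 0 < (3 - alpha)^-1 by rewrite invr_gt0.
by rewrite -subr_ge0 -(pmulr_rge0 _ ip).
Qed.


Definition Dmx (alpha : R) (X : 'M[C]_2) :=
  Phi alpha (adjmx X *m X) - Phi alpha (adjmx X) *m Phi alpha X.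

Definition nrm (x y : C) := x * Num.conj x + y * Num.conj y.

Lemma schw_id (alpha : R) (X : 'M[C]_2) (v : 'cV[C]_2) : alpha != 3 ->
  (adjmx v *m Dmx alpha X *m v) 0 0 =
  RC ((3 - alpha)^-1) ^+ 2 *
  ((2 - 6 * RC alpha) *
     nrm ((X 0 0 - X 1 1) / 2 * v 0 0 + X 0 1 * v 1 0)
         (X 1 0 * v 0 0 - (X 0 0 - X 1 1) / 2 * v 1 0)
   + 2 * (3 - RC alpha) *
     nrm ((X 0 0 - X 1 1) / 2 * Num.conj (v 1 0) - X 0 1 * Num.conj (v 0 0))
         (X 1 0 * Num.conj (v 1 0) + (X 0 0 - X 1 1) / 2 * Num.conj (v 0 0))).
Proof.
move=> h3.
set L := (adjmx v *m _ *m v) 0 0.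
rewrite /nrm !(rmorphM, rmorphD, rmorphB, rmorphN, fmorphV, rmorph_nat) /= !conjCK.
rewrite /L qf2E /Dmx !PhiE !mxE !sum2 !mxE /=.
have hb : (3 - RC alpha) != 0.
  rewrite -(rmorph_nat (real_complex R) 3) -rmorphB /=.
  by rewrite eq_complex /= eqxx andbT subr_eq0 eq_sym.
have hk : RC ((3 - alpha)^-1) = (3 - RC alpha)^-1.
  by rewrite fmorphV rmorphB /= rmorph_nat.
rewrite hk.
move: hb; move: (RC alpha) => a hb.
by field; exact: hb.
Qed.


Lemma adjmxB m n (A B : 'M[C]_(m,n)) : adjmx (A - B) = adjmx A - adjmx B.
Proof. by apply/matrixP=> i j; rewrite !mxE rmorphB. Qed.

Lemma Phi_adj (alpha : R) (Y : 'M[C]_2) : Phi alpha (adjmx Y) = adjmx (Phi alpha Y).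
Proof.
apply/matrixP=> i j; rewrite !PhiE !mxE.
case: (ord2P i) => ->; case: (ord2P j) => -> /=;
by rewrite !(rmorphM, rmorphB, rmorphD, rmorph_nat, rmorph0, rmorph1) /= !conjRC.
Qed.

Lemma sch_le (alpha : R) : alpha <= 3^-1 -> schwarz_map (Phi alpha).
Proof.
move=> ha X.
have h3 : alpha != 3.
  by apply/eqP => e; move: ha; rewrite e; lra.
split.
  have e1 : adjmx (Phi alpha (adjmx X *m X)) = Phi alpha (adjmx X *m X).
    by rewrite -Phi_adj adjmx_mul adjmxK.
  have e2 : adjmx (Phi alpha (adjmx X) *m Phi alpha X) = Phi alpha (adjmx X) *m Phi alpha X.
    by rewrite adjmx_mul -Phi_adj -Phi_adj adjmxK.
  by rewrite adjmxB e1 e2.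
move=> v; rewrite (schw_id _ _ _ h3).
have k0 : 0 <= RC ((3 - alpha)^-1).
  rewrite ler0c invr_ge0 subr_ge0; lra.
have c0 : 0 <= 2 - 6 * RC alpha.
  rewrite -(rmorph_nat (real_complex R) 2) -(rmorph_nat (real_complex R) 6) -rmorphM -rmorphB /=.
  rewrite ler0c; lra.
have c1 : 0 <= 2 * (3 - RC alpha).
  rewrite -(rmorph_nat (real_complex R) 2) -(rmorph_nat (real_complex R) 3) -rmorphB -rmorphM /=.
  rewrite ler0c; lra.
have n0 x y : 0 <= nrm x y by rewrite /nrm addr_ge0 // mul_conjC_ge0.
by rewrite mulr_ge0 ?exprn_ge0 // addr_ge0 // mulr_ge0.
Qed.


Lemma sch_ge (alpha : R) : alpha != 3 -> schwarz_map (Phi alpha) -> alpha <= 3^-1.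
Proof.
move=> h3 hS.
pose X0 : 'M[C]_2 := \matrix_(i, j) (if (i == 0) && (j == 1) then 1 else 0).
have [_ q] := hS X0.
have := q (vec2 0 1); rewrite -/(Dmx alpha X0) (schw_id _ _ _ h3) /nrm !vec2E0 !vec2E1 !mxE /= !conjC0 !conjC1.
match goal with |- is_true (@Order.le _ _ _ ?e) -> _ =>
  have -> : e = RC (((3 - alpha)^-1) ^+ 2 * (2 - 6 * alpha)) end.
  rewrite !(subrr, mul0r, mulr0, mul1r, addr0, add0r, subr0, oppr0, conjC0, conjC1, mulr1).
  rewrite rmorphM /= rmorphXn /= rmorphB /= rmorphM /= !rmorph_nat. ring.
rewrite ler0c.
have d0 : (3 - alpha) != 0 by rewrite subr_eq0 eq_sym.
have kp : 0 < ((3 - alpha)^-1) ^+ 2 by rewrite lt_def sqrf_eq0 invr_eq0 d0 sqr_ge0.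
rewrite pmulr_rge0 //; lra.
Qed.


Lemma sum_tens m n (F : 'I_(m * n) -> C) :
  \sum_(p < m * n) F p = \sum_(i < m) \sum_(j < n) F (mxtens_index (i, j)).
Proof.
rewrite pair_big /= (reindex (@mxtens_index m n)) //=.
  by apply: eq_bigr => -[].
by exists (@mxtens_unindex m n) => p _; rewrite (mxtens_indexK, mxtens_unindexK).
Qed.

Lemma ampl_E k n m (f : 'M[C]_n -> 'M[C]_m) (X : 'M[C]_(k * n)) i a j b :
  ampl f X (mxtens_index (i, a)) (mxtens_index (j, b)) = f (blockmx X i j) a b.
Proof.
rewrite /ampl summxE (bigD1 i) //= summxE (bigD1 j) //= tensmxE !mxE !eqxx mul1r.
rewrite big1 ?addr0; last first.
  by move=> j' hj'; rewrite tensmxE mxE eqxx eq_sym (negbTE hj') mul0r.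
rewrite big1 ?addr0 //.
move=> i' hi'; rewrite summxE big1 // => j' _.
by rewrite tensmxE mxE (eq_sym i i') (negbTE hi') mul0r.
Qed.


Lemma ampl_id k n (X : 'M[C]_(k * n)) : X = ampl (fun B => B) X.
Proof.
apply/matrixP=> p q.
case: (mxtens_indexP p) => i a; case: (mxtens_indexP q) => j b.
by rewrite ampl_E mxE.
Qed.

Lemma adjmx_tens m n p q (A : 'M[C]_(m, n)) (B : 'M[C]_(p, q)) :
  adjmx (A *t B) = adjmx A *t adjmx B.
Proof.
apply/matrixP=> x y.
case: (mxtens_indexP x) => i a; case: (mxtens_indexP y) => j b.
by rewrite tensmxE !mxE !mxtens_indexK rmorphM.
Qed.

Lemma adj1 n : adjmx (1%:M : 'M[C]_n) = 1%:M.
Proof. exact: (proj1 (psd1 n)). Qed.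

Lemma ampl_conj k n (K : 'M[C]_n) (X : 'M[C]_(k * n)) :
  ampl (fun B => K *m B *m adjmx K) X = (1%:M *t K) *m X *m adjmx (1%:M *t K).
Proof.
rewrite [in RHS](@ampl_id k n X) /ampl adjmx_tens adj1 mulmx_sumr mulmx_suml.
apply: eq_bigr => i _; rewrite mulmx_sumr mulmx_suml; apply: eq_bigr => j _.
by rewrite !tensmx_mul mul1mx mulmx1.
Qed.


Lemma conj_i : Num.conj ('i%C : C) = - 'i%C.
Proof. by apply/eqP; rewrite eq_complex /= oppr0 !eqxx. Qed.

Lemma adj_s1 : adjmx (sigma1 R) = sigma1 R.
Proof.
apply/matrixP=> i j; rewrite !mxE.
by case: (ord2P i) => ->; case: (ord2P j) => -> /=; rewrite ?conjC0 ?conjC1.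
Qed.

Lemma adj_s2 : adjmx (sigma2 R) = sigma2 R.
Proof.
apply/matrixP=> i j; rewrite !mxE.
by case: (ord2P i) => ->; case: (ord2P j) => -> /=; rewrite ?conjC0 ?rmorphN /= ?conj_i ?opprK.
Qed.

Lemma adj_s3 : adjmx (sigma3 R) = sigma3 R.
Proof.
apply/matrixP=> i j; rewrite !mxE.
by case: (ord2P i) => ->; case: (ord2P j) => -> /=; rewrite ?conjC0 ?conjC1 ?conjCN1.
Qed.

Lemma PhiK (alpha : R) (B : 'M[C]_2) : Phi alpha B =
  RC ((3 - alpha)^-1) *: (sigma1 R *m B *m adjmx (sigma1 R))
  + RC ((3 - alpha)^-1) *: (sigma2 R *m B *m adjmx (sigma2 R))
  + RC ((3 - alpha)^-1) *: (sigma3 R *m B *m adjmx (sigma3 R))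
  + RC (- alpha * (3 - alpha)^-1) *: (1%:M *m B *m adjmx 1%:M).
Proof.
rewrite /Phi adj_s1 adj_s2 adj_s3 adj1 mulmx1 mul1mx.
apply/matrixP=> i j; rewrite !mxE rmorphM rmorphN /=.
ring.
Qed.


Lemma entry_lin m n (c1 c2 c3 c4 : C) (A1 A2 A3 A4 : 'M[C]_(m, n)) i j :
  (c1 *: A1 + c2 *: A2 + c3 *: A3 + c4 *: A4) i j =
  c1 * A1 i j + c2 * A2 i j + c3 * A3 i j + c4 * A4 i j.
Proof. by rewrite !mxE. Qed.

Lemma cp_le (alpha : R) : alpha <= 0 -> completely_positive (Phi alpha).
Proof.
move=> ha k X pX.
pose L (K : 'M[C]_2) : 'M[C]_(k * 2) := 1%:M *t K.
have -> : ampl (Phi alpha) X =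
  RC ((3 - alpha)^-1) *: (L (sigma1 R) *m X *m adjmx (L (sigma1 R)))
  + RC ((3 - alpha)^-1) *: (L (sigma2 R) *m X *m adjmx (L (sigma2 R)))
  + RC ((3 - alpha)^-1) *: (L (sigma3 R) *m X *m adjmx (L (sigma3 R)))
  + RC (- alpha * (3 - alpha)^-1) *: (L 1%:M *m X *m adjmx (L 1%:M)).
  rewrite /L -!ampl_conj.
  apply/matrixP=> p q.
  case: (mxtens_indexP p) => i a; case: (mxtens_indexP q) => j b.
  rewrite entry_lin !ampl_E PhiK entry_lin.
  by [].
have k0 : 0 <= (3 - alpha)^-1 by rewrite invr_ge0; lra.
have k1 : 0 <= - alpha * (3 - alpha)^-1 by rewrite mulr_ge0 //; lra.
by do !apply: psd_add; apply: psd_scale => //; apply: psd_conj.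
Qed.


Lemma qf_delta n (M : 'M[C]_n) (p : 'I_n) :
  (adjmx (delta_mx p 0 : 'cV[C]_n) *m M *m (delta_mx p 0 : 'cV[C]_n)) 0 0 = M p p.
Proof.
have -> : adjmx (delta_mx p 0 : 'cV[C]_n) = delta_mx 0 p.
  apply/matrixP=> i j; rewrite !mxE.
  by case: (j == p); case: (i == 0); rewrite /= ?conjC0 ?conjC1.
by rewrite -rowE -colE !mxE.
Qed.

Lemma cp_ge (alpha : R) : alpha != 3 -> completely_positive (Phi alpha) -> alpha <= 0.
Proof.
move=> h3 hCP.
pose u : 'cV[C]_(2 * 2) :=
  \col_p (if (mxtens_unindex p).1 == (mxtens_unindex p).2 then 1 else 0).
pose X := u *m (1%:M : 'M[C]_1) *m adjmx u.
have pX : psd X by apply: psd_conj; apply: psd1.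
have [_ q] := hCP 2%N X pX.
have XE i a j b : X (mxtens_index (i, a)) (mxtens_index (j, b)) =
    (if i == a then 1 else 0) * (if j == b then 1 else 0).
  rewrite !mxE big_ord1 !mxE big_ord1 !mxE !mxtens_indexK /= mulr1.
  by case: (j == b); rewrite ?conjC1 ?conjC0.
have q1 := q (delta_mx (mxtens_index (0, 1)) 0).
clearbody X.
rewrite qf_delta ampl_E PhiE !mxE !XE /= in q1.
have q2 := q u.
rewrite mxE (sum_tens 2 2) !sum2 !mxE in q2.
rewrite !(sum_tens 2 2) !sum2 !mxE !mxtens_indexK /= !ampl_E !PhiE !mxE !XE /= !conjC1 !conjC0 in q2.
move: q1; match goal with |- is_true (@Order.le _ _ _ ?e) -> _ =>
  have -> : e = RC ((3 - alpha)^-1 * 2) by rewrite !rmorphM /= rmorph_nat; ring end.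
move: q2; match goal with |- is_true (@Order.le _ _ _ ?e) -> _ =>
  have -> : e = RC ((3 - alpha)^-1 * (- 4 * alpha)) by rewrite !rmorphM rmorphN /= rmorph_nat; ring end.
rewrite !ler0c => q2 q1.
have d0 : (3 - alpha) != 0 by rewrite subr_eq0 eq_sym.
have dp : 0 < 3 - alpha.
  apply: inv_pos => //; by rewrite -(pmulr_lge0 _ (ltr0n _ 2)).
have ip : 0 < (3 - alpha)^-1 by rewrite invr_gt0.
move: q2; rewrite pmulr_rge0 //; lra.
Qed.


End S.

Theorem corollary4 (R : rcfType) (alpha : R) (halpha : alpha != 3) :
  (positive_map (Phi alpha) <-> alpha <= 1) /\
  (schwarz_map (Phi alpha) <-> alpha <= 3^-1) /\
  (completely_positive (Phi alpha) <-> alpha <= 0).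
Proof.
split; first by split; [apply: pos_ge1 | apply: pos_le1].
split; first by split; [apply: sch_ge | apply: sch_le].
by split; [apply: cp_ge | apply: cp_le].
Qed.
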